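(* Let $I=[0,1]$ and $f_{1,\infty}$ an $m$-periodic sequence of continuous self-maps of $I$. If $(I,f_{1,\infty})$ is weakly mixing, then it is ergodically sensitive and syndetically sensitive.
   Context: $m$-periodic: $f_{n+m}=f_n$ for all $n$. Write $f_1^n=f_n\circ\cdots\circ f_1$. Weakly mixing: for all non-empty open $U_1,U_2,V_1,V_2$ there is $n$ with $f_1^n(U_i)\cap V_i\ne\emptyset$, $i=1,2$. For open $U$ and $\delta>0$, $N_{f_{1,\infty}}(U,\delta)=\{n\in\mathbb{N}:\exists x,y\in U,\ |f_1^n(x)-f_1^n(y)|>\delta\}$. A set $F\subseteq\mathbb{N}$ is syndetic if there is $a$ with $\{i,\dots,i+a\}\cap F\ne\emptyset$ for all $i$; upper density $\overline{d}(S)=\limsup_{n\to\infty}\frac1n|S\cap\{0,\dots,n-1\}|$. Syndetically (resp. ergodically) sensitive: there is $\delta>0$ with $N_{f_{1,\infty}}(U,\delta)$ syndetic (resp. of positive upper density) for every non-empty open $U$. *)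

(* Defs.v *)
From Stdlib Require Import Reals Lra Lia ClassicalEpsilon.
Open Scope R_scope.

Definition inI (x : R) : Prop := 0 <= x <= 1.

Definition openI (U : R -> Prop) : Prop :=
  (forall x, U x -> inI x) /\
  forall x, U x -> exists eps, 0 < eps /\
    forall y, inI y -> Rabs (y - x) < eps -> U y.

Definition nonempty (U : R -> Prop) : Prop := exists x, U x.

Definition cont_selfmap_I (g : R -> R) : Prop :=
  (forall x, inI x -> inI (g x)) /\
  (forall x eps, inI x -> 0 < eps -> exists del, 0 < del /\
     forall y, inI y -> Rabs (y - x) < del -> Rabs (g y - g x) < eps).

(* A sequence f_{1,oo}: the maps are f 1, f 2, ...; f 0 is unused. *)
Definition seq_cont_selfmaps_I (f : nat -> R -> R) : Prop :=
  forall n, (1 <= n)%nat -> cont_selfmap_I (f n).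

Definition periodic_seq (m : nat) (f : nat -> R -> R) : Prop :=
  forall n, (1 <= n)%nat -> f (n + m)%nat = f n.

Fixpoint comp1 (f : nat -> R -> R) (n : nat) (x : R) : R :=
  match n with
  | O => x
  | S k => f (S k) (comp1 f k x)
  end.

Definition weakly_mixing (f : nat -> R -> R) : Prop :=
  forall U1 U2 V1 V2 : R -> Prop,
    openI U1 -> nonempty U1 -> openI U2 -> nonempty U2 ->
    openI V1 -> nonempty V1 -> openI V2 -> nonempty V2 ->
    exists n : nat,
      (exists x, U1 x /\ V1 (comp1 f n x)) /\
      (exists x, U2 x /\ V2 (comp1 f n x)).

Definition Nset (f : nat -> R -> R) (U : R -> Prop) (delta : R) (n : nat) : Prop :=
  exists x y, U x /\ U y /\ Rabs (comp1 f n x - comp1 f n y) > delta.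

Definition syndetic (F : nat -> Prop) : Prop :=
  exists a : nat, forall i : nat, exists j, (i <= j <= i + a)%nat /\ F j.

Fixpoint count_below (S : nat -> Prop) (n : nat) : R :=
  match n with
  | O => 0
  | Datatypes.S k => count_below S k +
           (if excluded_middle_informative (S k) then 1 else 0)
  end.

(* Positive upper density: limsup_{n->oo} |S cap {0..n-1}|/n > 0.
   Since the ratios lie in [0,1], this is literally:
   there is c > 0 such that the ratio exceeds c for infinitely many n. *)
Definition pos_upper_density (S : nat -> Prop) : Prop :=
  exists c, 0 < c /\ forall N : nat, exists n : nat,
    (N <= n)%nat /\ (0 < n)%nat /\ count_below S n / INR n > c.

Definition syndetically_sensitive (f : nat -> R -> R) : Prop :=
  exists delta : R, 0 < delta /\
    (forall U, openI U -> nonempty U -> syndetic (Nset f U delta)).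

Definition ergodically_sensitive (f : nat -> R -> R) : Prop :=
  exists delta : R, 0 < delta /\
    (forall U, openI U -> nonempty U -> pos_upper_density (Nset f U delta)).

(* Main.v *)
Require Import Defs.
From Stdlib Require Import Reals Lra Lia ZArith ClassicalEpsilon.
Open Scope R_scope.

Definition contrel (g : R -> R) : Prop :=
  forall x eps, inI x -> 0 < eps -> exists del, 0 < del /\
     forall y, inI y -> Rabs (y - x) < del -> Rabs (g y - g x) < eps.

Definition clamp (x : R) : R := Rmax 0 (Rmin 1 x).

Lemma clamp_I x : inI (clamp x).
Proof. unfold clamp, inI, Rmax, Rmin; repeat destruct Rle_dec; lra. Qed.

Lemma clamp_id x : inI x -> clamp x = x.
Proof. unfold clamp, inI, Rmax, Rmin; intros; repeat destruct Rle_dec; lra. Qed.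

Lemma clamp_lip x y : Rabs (clamp y - clamp x) <= Rabs (y - x).
Proof.
  unfold clamp, Rmax, Rmin; repeat destruct Rle_dec;
  unfold Rabs; repeat destruct Rcase_abs; lra.
Qed.

Lemma contrel_continuity g : contrel g -> continuity (fun x => g (clamp x)).
Proof.
  intros hg x. unfold continuity_pt, continue_in, limit1_in, limit_in.
  simpl. unfold R_dist. intros eps heps.
  destruct (hg (clamp x) eps (clamp_I x) heps) as [del [hd H]].
  exists del; split; [lra|]. intros y [_ hy].
  apply H. apply clamp_I. pose proof (clamp_lip x y). lra.
Qed.

Lemma comp_cont (f : nat -> R -> R) : seq_cont_selfmaps_I f ->
  forall n, (forall x, inI x -> inI (comp1 f n x)) /\ contrel (comp1 f n).
Proof.
  intros hf n. induction n as [|n [IH1 IH2]].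
  - split; simpl; [auto|]. intros x eps _ he. exists eps; split; auto.
  - destruct (hf (S n) ltac:(lia)) as [h1 h2]. split.
    + intros x hx; simpl; auto.
    + intros x eps hx he. simpl.
      destruct (h2 (comp1 f n x) eps (IH1 x hx) he) as [d1 [hd1 H1]].
      destruct (IH2 x d1 hx hd1) as [d2 [hd2 H2]].
      exists d2; split; auto.
Qed.

Lemma unif_cont (g : R -> R) : contrel g -> forall eps, 0 < eps ->
  exists del, 0 < del /\ forall a b, inI a -> inI b -> Rabs (a - b) < del ->
    Rabs (g a - g b) < eps.
Proof.
  intros hg eps he.
  pose proof (Heine (fun x => g (clamp x)) (fun c => 0 <= c <= 1) (compact_P3 0 1)
    (fun x _ => contrel_continuity g hg x)) as H.
  destruct (H (mkposreal eps he)) as [[d hd] Hd]. simpl in Hd.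
  exists d; split; auto. intros a b ha hb hab.
  specialize (Hd a b ha hb hab). rewrite !clamp_id in Hd; auto.
Qed.

Lemma IVT_rel (g : R -> R) : contrel g -> forall a b v, inI a -> inI b ->
  Rmin (g a) (g b) <= v <= Rmax (g a) (g b) ->
  exists w, Rmin a b <= w <= Rmax a b /\ g w = v.
Proof.
  intros hg.
  assert (K : forall a b v, inI a -> inI b -> a <= b ->
     Rmin (g a) (g b) <= v <= Rmax (g a) (g b) ->
     exists w, a <= w <= b /\ g w = v).
  { intros a b v ha hb hab hv.
    destruct (IVT_cor (fun x => g (clamp x) - v) a b) as [w [hw1 hw2]]; auto.
    - apply continuity_minus. apply contrel_continuity; auto. apply continuity_const.
      intros ? ?; auto.
    - rewrite !clamp_id; auto. revert hv; unfold Rmin, Rmax; repeat destruct Rle_dec;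
      intros; nra.
    - exists w; split; auto. rewrite clamp_id in hw2. lra.
      unfold inI in *; lra. }
  intros a b v ha hb hv. destruct (Rle_dec a b).
  - destruct (K a b v) as [w [? ?]]; auto. exists w; split; auto.
    unfold Rmin, Rmax; repeat destruct Rle_dec; lra.
  - destruct (K b a v) as [w [? ?]]; auto. lra.
    revert hv; unfold Rmin, Rmax; repeat destruct Rle_dec; intros; lra.
    exists w; split; auto.
    unfold Rmin, Rmax; repeat destruct Rle_dec; lra.
Qed.

Lemma per_iter m f : periodic_seq m f -> forall q n, (1 <= n)%nat -> f (n + q * m)%nat = f n.
Proof.
  intros hp q. induction q as [|q IH]; intros n hn.
  - f_equal; lia.
  - replace (n + S q * m)%nat with ((n + q*m) + m)%nat by lia.
    rewrite hp by lia. auto.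
Qed.

Lemma shift m f : periodic_seq m f -> forall q t x,
  comp1 f (t + q * m) x = comp1 f t (comp1 f (q * m) x).
Proof.
  intros hp q t x. induction t as [|t IH].
  - reflexivity.
  - change (comp1 f (S t + q*m) x) with (f (S (t + q*m)) (comp1 f (t + q*m) x)).
    rewrite IH. simpl.
    change (S (t + q*m)) with (S t + q*m)%nat. rewrite (per_iter m f hp q (S t)) by lia.
    reflexivity.
Qed.

Lemma unif_all f : seq_cont_selfmaps_I f -> forall M, exists eta, 0 < eta /\
  forall r, (r < M)%nat -> forall a b, inI a -> inI b -> Rabs (a - b) < eta ->
    Rabs (comp1 f r a - comp1 f r b) < 1/2.
Proof.
  intros hf M. induction M as [|M [e [he H]]].
  - exists 1; split; [lra|]. intros; lia.
  - destruct (unif_cont (comp1 f M) (proj2 (comp_cont f hf M)) (1/2) ltac:(lra))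
      as [d [hd Hd]].
    exists (Rmin e d); split. apply Rmin_pos; auto.
    intros r hr a b ha hb hab.
    destruct (Nat.eq_dec r M) as [->|].
    + apply Hd; auto. pose proof (Rmin_r e d); lra.
    + apply H; auto. lia. pose proof (Rmin_l e d); lra.
Qed.

Definition ball (c r : R) : R -> Prop := fun y => inI y /\ Rabs (y - c) < r.

Lemma ball_open c r : openI (ball c r).
Proof.
  split. intros x [h _]; auto.
  intros x [hx hr]. exists (r - Rabs (x - c)). split. lra.
  intros y hy hyx. split; auto.
  pose proof (Rabs_triang (y - x) (x - c)). replace (y - x + (x - c)) with (y - c) in H by ring.
  lra.
Qed.

Lemma ball_ne c r : inI c -> 0 < r -> nonempty (ball c r).
Proof. intros. exists c. split; auto. rewrite Rminus_diag, Rabs_R0; auto. Qed.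

Lemma ball_conv c r a b w : ball c r a -> ball c r b ->
  Rmin a b <= w <= Rmax a b -> ball c r w.
Proof.
  unfold ball, inI, Rmin, Rmax; intros [ha h1] [hb h2] hw.
  revert h1 h2; unfold Rabs; repeat destruct Rcase_abs; destruct Rle_dec in hw;
    intros; split; try lra; destruct Rcase_abs; lra.
Qed.

Lemma lemmaA m f : (1 <= m)%nat -> seq_cont_selfmaps_I f -> periodic_seq m f ->
  weakly_mixing f -> exists eta, 0 < eta /\ forall W, openI W -> nonempty W ->
  exists i x y, W x /\ W y /\ Rabs (comp1 f (i*m) x - comp1 f (i*m) y) >= eta.
Proof.
  intros hm hf hp hw.
  destruct (unif_all f hf m) as [eta [he H]].
  exists eta; split; auto. intros W hW hne.
  destruct (hw W W (ball 0 (1/4)) (ball 1 (1/4)) hW hne hW hne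
     (ball_open _ _) (ball_ne 0 (1/4) ltac:(unfold inI; lra) ltac:(lra))
     (ball_open _ _) (ball_ne 1 (1/4) ltac:(unfold inI; lra) ltac:(lra)))
    as [n [[x [hx [_ hx2]]] [y [hy [_ hy2]]]]].
  pose proof (Nat.div_mod n m ltac:(lia)) as hdm.
  pose proof (Nat.mod_upper_bound n m ltac:(lia)) as hr.
  set (q := (n / m)%nat) in *. set (r := (n mod m)%nat) in *.
  assert (hn : n = (r + q * m)%nat) by lia.
  rewrite hn, shift in hx2, hy2 by auto.
  exists q, x, y. split; auto. split; auto.
  destruct (Rlt_le_dec (Rabs (comp1 f (q*m) x - comp1 f (q*m) y)) eta) as [hl|]; [|lra].
  exfalso.
  assert (ix : inI (comp1 f (q*m) x)) by (apply (comp_cont f hf); apply (proj1 hW); auto).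
  assert (iy : inI (comp1 f (q*m) y)) by (apply (comp_cont f hf); apply (proj1 hW); auto).
  specialize (H r hr _ _ ix iy hl).
  revert H hx2 hy2. unfold Rabs; repeat destruct Rcase_abs; lra.
Qed.

Lemma nat_up x : 0 <= x -> exists k : nat, x < INR k <= x + 1.
Proof.
  intros hx. destruct (archimed x) as [h1 h2].
  assert (hz : (0 < up x)%Z) by (apply lt_0_IZR; lra).
  exists (Z.to_nat (up x)). rewrite INR_IZR_INZ, Z2Nat.id by lia. lra.
Qed.

Lemma grid eta : 0 < eta -> exists K : nat, (0 < K)%nat /\
  forall p q, inI p -> inI q -> p <= q -> q - p >= eta ->
  exists k, (k <= K)%nat /\ forall z, ball (INR k / INR K) (eta/4) z -> p <= z <= q.
Proof.
  intros he. destruct (nat_up (2/eta)) as [K [hK1 hK2]].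
  { apply Rlt_le, Rdiv_lt_0_compat; lra. }
  assert (hKp : 0 < INR K). { assert (0 < 2/eta) by (apply Rdiv_lt_0_compat; lra). lra. }
  assert (hK : (0 < K)%nat) by (apply INR_lt; simpl; lra).
  assert (hinv : 1 / INR K < eta / 2).
  { apply (Rmult_lt_reg_r (INR K)); auto. field_simplify; [|lra].
    apply (Rmult_lt_reg_r (/eta)). apply Rinv_0_lt_compat; auto.
    unfold Rdiv in hK1. field_simplify; lra. }
  exists K; split; auto. intros p q hp hq hpq hd.
  destruct (nat_up (INR K * (p + eta/4))) as [k [hk1 hk2]].
  { apply Rmult_le_pos; unfold inI in *; lra. }
  assert (hc1 : p + eta/4 < INR k / INR K).
  { apply (Rmult_lt_reg_r (INR K)); auto. field_simplify; lra. }
  assert (hc2 : INR k / INR K <= p + eta/4 + 1 / INR K).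
  { apply (Rmult_le_reg_r (INR K)); auto. field_simplify; lra. }
  exists k. split.
  - apply INR_le. apply (Rmult_le_reg_r (/ INR K)). apply Rinv_0_lt_compat; auto.
    rewrite Rinv_r by lra. unfold inI in *. unfold Rdiv in hc2. lra.
  - intros z [_ hz]. revert hz; unfold Rabs; destruct Rcase_abs; intros; lra.
Qed.

Lemma fin_bound (P : nat -> nat -> Prop) : forall K,
  (forall k, (k <= K)%nat -> exists i, P k i) ->
  exists c, forall k, (k <= K)%nat -> exists i, (i <= c)%nat /\ P k i.
Proof.
  intros K. induction K as [|K IH]; intros H.
  - destruct (H 0%nat ltac:(lia)) as [i hi]. exists i. intros k hk.
    replace k with 0%nat by lia. exists i; split; auto.
  - destruct IH as [c hc]. intros; apply H; lia.
    destruct (H (S K) ltac:(lia)) as [i hi]. exists (Nat.max c i).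
    intros k hk. destruct (Nat.eq_dec k (S K)) as [->|].
    + exists i; split; auto; lia.
    + destruct (hc k ltac:(lia)) as [i' [? ?]]. exists i'; split; auto; lia.
Qed.

Lemma grow m f (hf : seq_cont_selfmaps_I f) eta K
  (hgrid : forall p q, inI p -> inI q -> p <= q -> q - p >= eta ->
    exists k, (k <= K)%nat /\ forall z, ball (INR k / INR K) (eta/4) z -> p <= z <= q)
  (X : R -> Prop) (XI : forall z, X z -> inI z)
  (Xc : forall a b w, X a -> X b -> Rmin a b <= w <= Rmax a b -> X w)
  i x y : X x -> X y -> Rabs (comp1 f (i*m) x - comp1 f (i*m) y) >= eta ->
  exists k, (k <= K)%nat /\ forall z, ball (INR k / INR K) (eta/4) z ->
    exists w, X w /\ comp1 f (i*m) w = z.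
Proof.
  intros hx hy hd.
  destruct (comp_cont f hf (i*m)) as [hI hc].
  set (p := comp1 f (i*m) x) in *. set (q := comp1 f (i*m) y) in *.
  destruct (hgrid (Rmin p q) (Rmax p q)) as [k [hk Hk]].
  - unfold Rmin; destruct Rle_dec; apply hI; auto.
  - unfold Rmax; destruct Rle_dec; apply hI; auto.
  - unfold Rmin, Rmax; destruct Rle_dec; lra.
  - revert hd; unfold Rmin, Rmax, Rabs; destruct Rle_dec; destruct Rcase_abs; lra.
  - exists k; split; auto. intros z hz. specialize (Hk z hz).
    destruct (IVT_rel _ hc x y z (XI _ hx) (XI _ hy) Hk) as [w [hw1 hw2]].
    exists w; split; auto. apply (Xc x y); auto.
Qed.

Lemma synd_main (m : nat) (f : nat -> R -> R) :
  (1 <= m)%nat -> seq_cont_selfmaps_I f -> periodic_seq m f -> weakly_mixing f ->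
  syndetically_sensitive f.
Proof.
  intros hm hf hp hw.
  destruct (lemmaA m f hm hf hp hw) as [eta [he HA]].
  destruct (grid eta he) as [K [hK hgrid]].
  set (W := fun k : nat => ball (INR k / INR K) (eta/4)).
  assert (hKp : 0 < INR K) by (apply lt_0_INR; lia).
  assert (Wc : forall k, (k <= K)%nat -> inI (INR k / INR K)).
  { intros k hk. apply le_INR in hk. split.
    - unfold Rdiv. apply Rmult_le_pos. apply pos_INR. apply Rlt_le, Rinv_0_lt_compat; auto.
    - apply (Rmult_le_reg_r (INR K)); auto. field_simplify; lra. }
  assert (pre : forall k, (k <= K)%nat -> exists i, (1 <= i)%nat /\
     exists x y, W k x /\ W k y /\ Rabs (comp1 f (i*m) x - comp1 f (i*m) y) >= eta).
  { intros k hk. destruct (HA (W k) (ball_open _ _) (ball_ne (INR k / INR K) (eta/4) (Wc k hk) ltac:(lra)))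
      as [i [x [y [hx [hy hd]]]]].
    exists i. split; [|exists x, y; auto].
    destruct i; [|lia]. exfalso. simpl in hd.
    destruct hx as [_ hx]; destruct hy as [_ hy]. revert hx hy hd.
    unfold Rabs; repeat destruct Rcase_abs; lra. }
  destruct (fin_bound (fun k i => (1 <= i)%nat /\
     exists x y, W k x /\ W k y /\ Rabs (comp1 f (i*m) x - comp1 f (i*m) y) >= eta)
     K pre) as [c hc].
  exists (eta/2). split; [lra|]. intros U hU [x0 hx0].
  destruct (proj2 hU x0 hx0) as [e [hep HU]].
  set (B := ball x0 e).
  assert (BU : forall z, B z -> U z) by (intros z [h1 h2]; apply HU; auto).
  set (H := fun j : nat => exists k, (k <= K)%nat /\ forall z, W k z ->
        exists x, B x /\ comp1 f (j*m) x = z).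
  assert (step : forall j, H j -> exists i, (1 <= i <= c)%nat /\ H (j + i)%nat /\
      Nset f U (eta/2) ((j+i)*m)%nat).
  { intros j [k [hk Hk]]. destruct (hc k hk) as [i [hic [hi1 [x [y [hx [hy hd]]]]]]].
    exists i. split; [lia|].
    destruct (Hk x hx) as [x' [hx' ex]]. destruct (Hk y hy) as [y' [hy' ey]].
    assert (sh : forall w, comp1 f ((j+i)*m) w = comp1 f (i*m) (comp1 f (j*m) w)).
    { intros w. replace ((j+i)*m)%nat with (i*m + j*m)%nat by lia. apply (shift m f hp). }
    split.
    - destruct (grow m f hf eta K hgrid (W k) (fun z h => proj1 h)
         (fun a b w ha hb hw1 => ball_conv _ _ a b w ha hb hw1) i x y hx hy hd)
        as [k' [hk' Hk']].
      exists k'. split; auto. intros z hz. destruct (Hk' z hz) as [w [hw0 ew]].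
      destruct (Hk w hw0) as [w' [hw' ew']]. exists w'. split; auto.
      rewrite sh, ew', ew; auto.
    - exists x', y'. split; [apply BU; auto|]. split; [apply BU; auto|].
      rewrite !sh, ex, ey. lra. }
  assert (base : exists j1, H j1).
  { destruct (HA B (ball_open _ _) (ball_ne _ _ (proj1 hU x0 hx0) hep))
      as [i [x [y [hx [hy hd]]]]].
    destruct (grow m f hf eta K hgrid B (fun z h => proj1 h)
         (fun a b w ha hb hw1 => ball_conv _ _ a b w ha hb hw1) i x y hx hy hd)
        as [k' [hk' Hk']].
    exists i, k'. split; auto. }
  destruct base as [j1 hj1].
  assert (chain : forall n, exists j, (n <= j <= n + j1 + c)%nat /\ H j /\
     Nset f U (eta/2) (j*m)%nat).
  { intros n. induction n as [|n [j [hj [Hj Nj]]]].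
    - destruct (step j1 hj1) as [i [hi [Hi Ni]]]. exists (j1 + i)%nat. split; [lia|auto].
    - destruct (Nat.eq_dec j n) as [->|].
      + destruct (step n Hj) as [i [hi [Hi Ni]]]. exists (n + i)%nat. split; [lia|auto].
      + exists j. split; [lia|auto]. }
  exists ((j1 + c + 1) * m)%nat. intros i.
  pose proof (Nat.div_mod i m ltac:(lia)) as hdm.
  pose proof (Nat.mod_upper_bound i m ltac:(lia)) as hr.
  destruct (chain (i / m + 1)%nat) as [j [hj [_ Nj]]].
  exists (j * m)%nat. split; auto.
  set (q := (i / m)%nat) in *. set (r := (i mod m)%nat) in *.
  split; nia.
Qed.

Lemma cb_step S n : count_below S n <= count_below S (Datatypes.S n).
Proof. simpl. destruct excluded_middle_informative; lra. Qed.

Lemma cb_mono S p n : (p <= n)%nat -> count_below S p <= count_below S n.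
Proof.
  intros h. induction h. lra. pose proof (cb_step S m). lra.
Qed.

Lemma cb_hit S j : S j -> count_below S (Datatypes.S j) = count_below S j + 1.
Proof. intros h. simpl. destruct excluded_middle_informative; [lra|contradiction]. Qed.

Lemma synd_dens S : syndetic S -> pos_upper_density S.
Proof.
  intros [a ha].
  assert (hk : forall k, INR k <= count_below S ((a+1)*k)).
  { intros k. induction k as [|k IH].
    - simpl. replace ((a+1)*0)%nat with 0%nat by lia. simpl; lra.
    - destruct (ha ((a+1)*k)%nat) as [j [hj Sj]].
      pose proof (cb_mono S ((a+1)*k) j ltac:(lia)).
      pose proof (cb_mono S (Datatypes.S j) ((a+1)*Datatypes.S k) ltac:(lia)).
      rewrite cb_hit in H0 by auto. rewrite S_INR. lra. }
  assert (ha1 : 0 < INR (a+1)) by (apply lt_0_INR; lia).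
  exists (1 / (2 * INR (a+1))). split.
  { apply Rdiv_lt_0_compat; lra. }
  intros N. exists ((a+1) * Datatypes.S N)%nat. split; [nia|]. split; [nia|].
  specialize (hk (Datatypes.S N)). rewrite mult_INR.
  assert (hN : 0 < INR (Datatypes.S N)) by (apply lt_0_INR; lia).
  apply Rlt_gt. apply (Rmult_lt_reg_r (INR (a+1) * INR (Datatypes.S N))). nra.
  field_simplify; try lra.
Qed.

Theorem corollary4p3 (m : nat) (f : nat -> R -> R) :
  (1 <= m)%nat ->
  seq_cont_selfmaps_I f ->
  periodic_seq m f ->
  weakly_mixing f ->
  ergodically_sensitive f /\ syndetically_sensitive f.
Proof.
  intros hm hf hp hw.
  destruct (synd_main m f hm hf hp hw) as [d [hd H]].
  split; exists d; split; auto. intros U hU hne. apply synd_dens; auto.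
Qed.
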